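(* Assume the high-level cost is $H(x,u,\theta)=L(x,u,\theta)+B(\theta)$ with $B(\theta)=\sum_j-\ln(g_j(\theta))$, where $g(\theta)\ge0\iff\theta\in\mathcal{T}$ and $\mathcal{T}\subset\mathbb{R}^c$ is compact. Let $H_k(\theta)=J^L(x_0^k,\theta)+B(\theta)$, let $\theta$ be a point at which $H_k$ is finite, and let $p$ be a descent direction for $H_k$ at $\theta$, i.e. $\nabla_\theta H_k(\theta)^Tp<0$. Then for constants $0<c_1<c_2<1$ there exists $\alpha>0$ satisfying the Wolfe conditions $H_k(\theta+\alpha p)\le H_k(\theta)+c_1\alpha\nabla_\theta H_k(\theta)^Tp$ and $\nabla_\theta H_k(\theta+\alpha p)^Tp\ge c_2\nabla_\theta H_k(\theta)^Tp$.
   Context: $J^L(x_0,\theta)$ is the optimal value of the low-level MPC program $\min_{x,u}L(x,u,\theta)$ s.t. $(x,u)\in\mathcal{C}(\theta)$, $x_{i+1}=f(x_i,u_i,\theta)$ with initial condition $x_0$; $x_0^k$ is the initial condition at time step $k$. *)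

(* Defs.v *)
From HB Require Import structures.
From mathcomp Require Import all_boot all_order all_algebra.
From mathcomp Require Import all_classical all_reals all_analysis.
Set Implicit Arguments. Unset Strict Implicit. Unset Printing Implicit Defensive.
Import Order.TTheory GRing.Theory Num.Theory.
Local Open Scope classical_set_scope.
Local Open Scope ring_scope.

Definition feas_set (R : realType) (c m : nat) (g : 'I_m -> 'rV[R]_c -> R)
  : set 'rV[R]_c := [set th | forall j, 0 <= g j th].

Definition barrier (R : realType) (c m : nat) (g : 'I_m -> 'rV[R]_c -> R)
  (th : 'rV[R]_c) : R := \sum_(j < m) - ln (g j th).

(* H_k(theta) = J^L(x_0^k, theta) + B(theta), with J th = J^L(x_0^k, th). *)
Definition Hk (R : realType) (c m : nat) (J : 'rV[R]_c -> R)
  (g : 'I_m -> 'rV[R]_c -> R) (th : 'rV[R]_c) : R := J th + barrier g th.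

(* Main.v *)
Require Import Defs.
From HB Require Import structures.
From mathcomp Require Import all_boot all_order all_algebra.
From mathcomp Require Import all_classical all_reals all_analysis.
Import Order.TTheory GRing.Theory Num.Theory numFieldNormedType.Exports.
Local Open Scope classical_set_scope.
Local Open Scope ring_scope.
From mathcomp Require Import lra.
Lemma Hk_diff (R : realType) (c m : nat) (J : 'rV[R]_c -> R)
  (g : 'I_m -> 'rV[R]_c -> R)
  (hJ : forall th, feas_set g th -> differentiable J th)
  (hg : forall j th, feas_set g th -> differentiable (g j) th) x :
  (forall j, 0 < g j x) -> differentiable (Hk J g) x.
Proof.
move=> gpos.
have fx : feas_set g x by move=> j; exact: ltW.
have -> : Hk J g = J + \sum_(j < m) (fun y => - ln (g j y)).
  by apply/funext => y; rewrite /Hk /barrier fct_sumE.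
apply: differentiableD; first exact: hJ.
apply: differentiable_sum => j.
apply: differentiableN.
change (differentiable (@ln R \o g j) x).
apply: differentiable_comp; first exact: hg.
apply/derivable1_diffP.
by have [] := is_derive1_ln (gpos j).
Qed.
Lemma line_eq (R : realType) (c : nat) (F : 'rV[R]_c -> R) (th p : 'rV[R]_c) (s : R) :
  (fun h : R => h^-1 *: (((fun a : R => F (th + a *: p)) \o shift s) (h *: 1) - F (th + s *: p)))
  = (fun h : R => h^-1 *: ((F \o shift (th + s *: p)) (h *: p) - F (th + s *: p))).
Proof.
apply/funext => h /=; congr (_ *: (F _ - _)).
have -> : h *: (1:R) = h by rewrite /GRing.scale /= mulr1.
by rewrite scalerDl addrCA addrA.
Qed.

Lemma line_deriv (R : realType) (c : nat) (F : 'rV[R]_c -> R) (th p : 'rV[R]_c) (s : R) :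
  differentiable F (th + s *: p) ->
  derivable (fun a : R => F (th + a *: p)) s 1 /\
  'D_1 (fun a : R => F (th + a *: p)) s = 'd F (th + s *: p) p.
Proof.
move=> dF; split.
  rewrite /derivable line_eq; exact: diff_derivable.
rewrite /derive line_eq -deriveE //.
Qed.
Lemma stepB (R : realType) (phi D : R -> R) (a1 c1 c2 : R) :
  0 < a1 -> (forall s, 0 <= s <= a1 -> derivable phi s 1 /\ 'D_1 phi s = D s) ->
  D 0 < 0 -> 0 < c1 -> c1 < c2 -> c2 < 1 -> phi 0 <= phi a1 ->
  exists b, 0 < b < a1 /\ phi b <= phi 0 + c1 * b * D 0 /\ c2 * D 0 <= D b.
Proof.
move=> a1pos hd D0 c1pos c12 c2lt1 phia1.
pose k := c1 * D 0.
pose psi := phi - k \*: (@id R).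
have dpsi : forall s, 0 <= s <= a1 -> is_derive s 1 psi (D s - k *: 1).
  move=> s /hd [d1 d2].
  have hphi : is_derive s 1 phi (D s) by apply: DeriveDef.
  exact: is_deriveB.
have cpsi : {within `[0, a1], continuous psi}.
  apply: continuous_in_subspaceT => s; rewrite inE /= in_itv /= => /dpsi ds.
  apply: differentiable_continuous; apply/derivable1_diffP.
  by case: ds.
have [b bin bmin] := EVT_min (ltW a1pos) cpsi.
have ds0 := dpsi 0 (ltac:(by rewrite lexx ltW)).
have cv : (fun h : R => h^-1 *: ((psi \o shift 0) (h *: 1) - psi 0)) @ 0^' --> D 0 - k *: 1.
  rewrite -(@derive_val _ _ _ _ _ _ _ ds0); case: ds0 => dd _; exact: dd.
have neg : D 0 - k *: 1 < 0.
  have -> : k *: (1:R) = k by rewrite /GRing.scale /= mulr1.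
  rewrite /k -{1}(mul1r (D 0)) -mulrBl.
  rewrite pmulr_rlt0 ?subr_gt0 //; exact: lt_trans c12 c2lt1.
have := @cvgr_lt _ _ _ _ _ _ cv _ neg.
move=> [e /= e0 He].
have sE : forall t : R, t%:A = t by move=> t; rewrite /GRing.scale /= mulr1.
have psiE : forall t, psi t = phi t - k * t.
  by [].
pose h := Num.min (e / 2) (a1 / 2).
have hpos : 0 < h by rewrite lt_min !divr_gt0.
have he : h < e by rewrite /h gt_min ltr_pdivrMr // ltr_pMr // ltr1n.
have ha1 : h < a1.
  by rewrite /h gt_min orbC ltr_pdivrMr // ltr_pMr // ltr1n.
have hlt : psi h < psi 0.
  have := He h; rewrite /ball_ /= sub0r normrN gtr0_norm // => /(_ he (lt0r_neq0 hpos)).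
  rewrite sE addr0 pmulr_rlt0 ?invr_gt0 // subr_lt0; exact.
have hin : h \in `[0, a1] by rewrite in_itv /= (ltW hpos) (ltW ha1).
have bltb : psi b < psi 0 by apply: le_lt_trans (bmin _ hin) hlt.
have k0 : k <= 0 by rewrite /k pmulr_rle0 // ltW.
have pa1 : psi 0 <= psi a1.
  rewrite !psiE mulr0 subr0 (le_trans phia1) // lerDl oppr_ge0.
  exact: mulr_le0_ge0 k0 (ltW a1pos).
move: (bin); rewrite in_itv /= => /andP [b0 ba1].
have b0' : 0 < b.
  rewrite lt_neqAle b0 andbT; apply/eqP => eb; move: bltb; rewrite -eb ltxx //.
have ba1' : b < a1.
  rewrite lt_neqAle ba1 andbT; apply/eqP => eb; move: bltb; rewrite eb.
  by rewrite ltNge pa1.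
have bin' : b \in `]0, a1[ by rewrite in_itv /= b0' ba1'.
have dz : is_derive b 1 psi 0.
  apply: (@derive1_at_min _ psi 0 a1 b (ltW a1pos)) => //.
    move=> t; rewrite in_itv /= => /andP [t0 t1].
    by have [] := dpsi t (ltac:(by rewrite !ltW)).
  move=> t; rewrite in_itv /= => /andP [t0 t1]; apply: bmin.
  by rewrite in_itv /= !ltW.
have Db : D b = k.
  have db := dpsi b (ltac:(by rewrite !ltW)).
  have := @derive_val _ _ _ _ _ _ _ db; rewrite (@derive_val _ _ _ _ _ _ _ dz).
  by rewrite sE => /eqP; rewrite eq_sym subr_eq0 => /eqP.
exists b; split; first by rewrite b0' ba1'.
split.
  move: bltb; rewrite !psiE mulr0 subr0 ltrBlDr => /ltW; rewrite /k.
  by rewrite -mulrA [D 0 * b]mulrC mulrA.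
rewrite Db /k ler_nM2r //; exact: ltW.
Qed.
Lemma approx (R : realType) (c : nat) (th p : 'rV[R]_c) (a e : R) :
  0 < a -> 0 < e ->
  exists t, 0 < t < a /\ `|(th + a *: p) - (th + t *: p)| < e.
Proof.
move=> a0 e0.
have np : 0 < `|p| + 1 by rewrite ltr_wpDl.
pose d := Num.min (a / 2) (e / (2 * (`|p| + 1))).
have d0 : 0 < d by rewrite lt_min !divr_gt0 // mulr_gt0.
have da : d < a by rewrite gt_min ltr_pdivrMr // ltr_pMr // ltr1n.
exists (a - d); split.
  by rewrite subr_gt0 da /= ltrBlDr ltrDl.
rewrite opprD addrACA subrr add0r -scalerBl opprB addrCA subrr addr0.
rewrite normrZ gtr0_norm //.
have : d <= e / (2 * (`|p| + 1)) by rewrite ge_min lexx orbT.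
rewrite ler_pdivlMr ?mulr_gt0 // => hd.
apply: (le_lt_trans (y := d * (`|p| + 1))).
  by rewrite ler_pM2l // lerDl.
apply: (le_lt_trans (y := e / 2)).
  by rewrite ler_pdivlMr // -mulrA [_ * 2]mulrC.
by rewrite ltr_pdivrMr // ltr_pMr // ltr1n.
Qed.
Lemma dist_line (R : realType) (c : nat) (th p : 'rV[R]_c) (a t : R) :
  `|(th + a *: p) - (th + t *: p)| = `|a - t| * `|p|.
Proof. by rewrite opprD addrACA subrr add0r -scalerBl normrZ. Qed.
Lemma stepA (R : realType) (c m : nat) (J : 'rV[R]_c -> R)
  (g : 'I_m -> 'rV[R]_c -> R)
  (hT : compact (feas_set g : set 'rV[R]_c))
  (hJ : forall th, feas_set g th -> differentiable J th)
  (hg : forall j th, feas_set g th -> differentiable (g j) th)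
  (th p : 'rV[R]_c) (hfin : forall j, 0 < g j th) (p0 : p != 0) (M : R) :
  exists a1, 0 < a1 /\ (forall s, 0 <= s <= a1 -> forall j, 0 < g j (th + s *: p))
    /\ M <= Hk J g (th + a1 *: p).
Proof.
pose P := fun s : R => forall j, 0 < g j (th + s *: p).
pose S := [set a : R | 0 <= a /\ forall s, 0 <= s <= a -> P s].
have S0 : S 0.
  split=> // s; rewrite -eq_le => /eqP <-; rewrite /P scale0r addr0; exact: hfin.
have [M0 [_ HM]] := compact_bounded hT.
have np : 0 < `|p| by rewrite normr_gt0.
have hsup : has_sup S.
  split; first by exists 0.
  exists ((M0 + 1 + `|th|) / `|p|) => a [a0 Ha].
  have fa : feas_set g (th + a *: p) by move=> j; apply/ltW/Ha; rewrite a0 lexx.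
  have := HM (M0 + 1) (ltac:(by rewrite ltrDl)) _ fa.
  rewrite ler_pdivlMr // => hb.
  have : `|a *: p| <= `|th + a *: p| + `|th|.
    by rewrite -[in X in X <= _](addKr th (a *: p)) addrC ler_normB.
  rewrite normrZ ger0_norm // => h1; apply: le_trans h1 _; rewrite lerD2r //.
pose as_ := sup S.
have as0 : 0 <= as_ by apply: sup_upper_bound.
have below : forall t, 0 <= t < as_ -> P t.
  move=> t /andP [t0 ta].
  have [e [e0 He] /=] := @sup_adherent _ S (as_ - t) (ltac:(by rewrite subr_gt0)) hsup.
  rewrite opprB addrCA subrr addr0 => te.
  by apply: He; rewrite t0 ltW.
pose q := th + as_ *: p.
have clT : closed (feas_set g) := compact_closed (@norm_hausdorff _ _) hT.
have fq : feas_set g q.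
  have [a_eq0 | a_pos] := eqVneq as_ 0.
    by rewrite /q a_eq0 scale0r addr0 => j; apply: ltW.
  have a_gt0 : 0 < as_ by rewrite lt_neqAle eq_sym a_pos.
  move/closure_id: clT => ->.
  move=> B /nbhs_ballP [e e0 He]; have e0p : 0 < e := e0.
  have [t [/andP [t0 ta] hqt]] := @approx _ _ th p _ _ a_gt0 e0p.
  exists (th + t *: p); split.
    by move=> j; apply/ltW/below; rewrite ta ltW.
  by apply: He; rewrite -ball_normE /=.
have [j0 gj0] : exists j0, g j0 q <= 0.
  case: (pselect (exists j0, g j0 q <= 0)) => // nex.
  have pos : forall j, 0 < g j q.
    by move=> j; rewrite ltNge; apply/negP => h; apply: nex; exists j.
  have nb : \forall y \near q, forall j, 0 < g j y.
    apply: (@filter_forall _ _ (fun j y => 0 < g j y) (nbhs q) _) => j.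
    have cj := differentiable_continuous (hg j q fq).
    exact: (cvgr_gt _ cj _ (pos j)).
  move: nb => /nbhs_ballP [e e0 He]; have e0p : 0 < e := e0.
  have np1 : 0 < `|p| + 1 by rewrite ltr_wpDl.
  pose s := as_ + e / (2 * (`|p| + 1)).
  have d0 : 0 < e / (2 * (`|p| + 1)) by rewrite divr_gt0 // mulr_gt0.
  have Ss : S s.
    split; first by rewrite addr_ge0 // ltW.
    move=> s' /andP [s'0 s's].
    have [s'a | as'] := ltP s' as_; first by apply: below; rewrite s'0.
    move=> j; apply: (He _ _ j); rewrite -ball_normE /= dist_line.
    rewrite distrC ger0_norm ?subr_ge0 //.
    apply: (le_lt_trans (y := e / (2 * (`|p| + 1)) * `|p|)).
      by rewrite ler_pM2r // lerBlDl.
    apply: (le_lt_trans (y := e / 2)).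
      apply: (le_trans (y := e / (2 * (`|p| + 1)) * (`|p| + 1))).
        by rewrite ler_pM2l // lerDl.
      by rewrite invfM mulrA mulfVK // gt_eqF.
    by rewrite ltr_pdivrMr // ltr_pMr // ltr1n.
  have := sup_upper_bound hsup Ss.
  by rewrite -/as_ /s gerDl leNgt d0.
have a_gt0 : 0 < as_.
  rewrite lt_neqAle as0 andbT; apply/eqP => a0.
  by move: gj0; rewrite /q -a0 scale0r addr0 leNgt hfin.
pose G := fun i => g i q + 1.
have Gpos : forall i, 0 < G i by move=> i; exact: ltr_wpDl (fq i) ltr01.
pose L := \sum_(i < m | i != j0) ln (G i).
pose eta := expR (- (M - (J q - 1) + L)).
have n1 : \forall y \near q, J q - 1 < J y.
  have jl : J q - 1 < J q by rewrite ltrBlDr ltrDl.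
  exact: (cvgr_gt _ (differentiable_continuous (hJ q fq)) _ jl).
have n2 : \forall y \near q, forall i, g i y < G i.
  apply: (@filter_forall _ _ (fun i y => g i y < G i) (nbhs q) _) => i.
  have gl : g i q < G i by rewrite /G ltrDl.
  exact: (cvgr_lt _ (differentiable_continuous (hg i q fq)) _ gl).
have n3 : \forall y \near q, g j0 y < eta.
  exact: (cvgr_lt _ (differentiable_continuous (hg j0 q fq)) _ (le_lt_trans gj0 (expR_gt0 _))).
have nb : \forall y \near q, (J q - 1 < J y) /\ ((forall i, g i y < G i) /\ g j0 y < eta).
  by apply: filterI => //; apply: filterI.
move: nb => /nbhs_ballP [e e0 He]; have e0p : 0 < e := e0.
have [t [/andP [t0 ta] hqt]] := @approx _ _ th p _ _ a_gt0 e0p.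
have [hJy [hGy hey]] : J q - 1 < J (th + t *: p) /\ (forall i, g i (th + t *: p) < G i)
    /\ g j0 (th + t *: p) < eta.
  by apply: He; rewrite -ball_normE /=.
have Pt : P t by apply: below; rewrite ltW.
exists t; split => //; split.
  move=> s /andP [s0 st]; apply: below; rewrite s0 /=; exact: le_lt_trans st ta.
rewrite /Hk /barrier (bigD1 j0) //=.
have h2 : M - (J q - 1) + L < - ln (g j0 (th + t *: p)).
  rewrite ltrNr -[X in _ < X]expRK ltr_ln ?posrE ?expR_gt0 //; exact: Pt.
have h3 : \sum_(i < m | i != j0) - ln (G i) <= \sum_(i < m | i != j0) - ln (g i (th + t *: p)).
  apply: ler_sum => i _; rewrite lerN2 ler_ln ?posrE //; exact: ltW.
rewrite sumrN in h3.
rewrite -/L in h3.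
lra.
Qed.
Theorem lemma4 (R : realType) (c m : nat) (J : 'rV[R]_c -> R)
  (g : 'I_m -> 'rV[R]_c -> R)
  (hT : compact (feas_set g : set 'rV[R]_c))
  (hJ : forall th, feas_set g th -> differentiable J th)
  (hg : forall j th, feas_set g th -> differentiable (g j) th)
  (th p : 'rV[R]_c)
  (hfin : forall j, 0 < g j th)
  (hdesc : 'd (Hk J g) th p < 0)
  (c1 c2 : R) (hc1 : 0 < c1) (hc12 : c1 < c2) (hc2 : c2 < 1) :
  exists alpha : R, 0 < alpha /\
    (forall j, 0 < g j (th + alpha *: p)) /\
    Hk J g (th + alpha *: p) <= Hk J g th + c1 * alpha * 'd (Hk J g) th p /\
    c2 * 'd (Hk J g) th p <= 'd (Hk J g) (th + alpha *: p) p.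
Proof.
have p0 : p != 0.
  by apply/eqP => p0; move: hdesc; rewrite p0 linear0 ltxx.
have [a1 [a1pos [Pa1 ba1]]] := @stepA _ _ _ J g hT hJ hg th p hfin p0 (Hk J g th).
have e0 : th + 0 *: p = th by rewrite scale0r addr0.
pose phi := fun a : R => Hk J g (th + a *: p).
pose D := fun a : R => 'd (Hk J g) (th + a *: p) p.
have hd : forall s, 0 <= s <= a1 -> derivable phi s 1 /\ 'D_1 phi s = D s.
  move=> s hs; apply: line_deriv; apply: (@Hk_diff _ _ _ J g hJ hg); exact: Pa1.
have D0 : D 0 < 0 by rewrite /D e0.
have ph : phi 0 <= phi a1 by rewrite /phi e0.
have [b [/andP [b0 ba] [h1 h2]]] := @stepB R phi D a1 c1 c2 a1pos hd D0 hc1 hc12 hc2 ph.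
exists b; split; first exact: b0.
split.
  move=> j; apply: Pa1; rewrite (ltW b0) /=; exact: ltW.
move: h1 h2; rewrite /phi /D e0 => h1 h2; split; [exact: h1 | exact: h2].
Qed.
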